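(* Let $f:\mathbb{R}^n\to(-\infty,+\infty]$ be a proper closed function, let $\mathcal{M}$ be a $C^1$-smooth embedded submanifold of $\mathbb{R}^n$ containing $\bar x$ with the induced metric, and suppose $f$ is $C^1$-partly smooth and prox-regular around $\bar x$ relative to $\mathcal{M}$, with $g_{\mathcal{U}}(\bar x)\in\operatorname{ri}\partial f(\bar x)$. Then for all $x\in\mathcal{M}$ near $\bar x$, $\nabla_{\mathcal{M}}f(x)=g_{\mathcal{U}}(x)$.
   Context: $\hat\partial f$ is the Fréchet and $\partial f$ the limiting subdifferential. Partial smoothness: $f$ is partly smooth at a point $x\in\mathcal M$ relative to a $C^p$ manifold $\mathcal{M}$ (for all subgradients) if: (Regularity) $\hat\partial f(z)=\partial f(z)\neq\varnothing$ for all $z\in\mathcal{M}$ near $x$; (Restricted smoothness) $f|_{\mathcal{M}}$ is $C^p$-smooth around $x$; (Sharpness) $\operatorname{par}\partial f(x)$ equals $N_x\mathcal{M}$; (Inner semicontinuity) for every $y\in\partial f(x)$ and every sequence $x_r\to x$ in $\mathcal{M}$ there exist $y_r\in\partial f(x_r)$ with $y_r\to y$. ''Around $\bar x$ relative to $\mathcal M$'' means at every point of $\mathcal M$ near $\bar x$ (with $p=1$). $f$ is prox-regular at $x$ for $\bar v\in\hat\partial f(x)$ if there are $\epsilon>0,\rho\ge0$ with $f(x'')\ge f(x')+\langle v,x''-x'\rangle-\frac\rho2\|x''-x'\|^2$ for all $x',x''\in B_\epsilon(x)$ and $v\in\hat\partial f(x')$ with $\|v-\bar v\|<\epsilon$,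 $f(x')<f(x)+\epsilon$; ''prox-regular around $\bar x$ relative to $\mathcal M$'' is taken to mean prox-regular at every point of $\mathcal M$ near $\bar x$ for each of its subgradients. For $g\in\partial f(x)$: $\mathcal{V}(x)=\operatorname{lin}(\partial f(x)-g)$, $\mathcal{U}(x)=\mathcal{V}(x)^\perp$, $g_{\mathcal U}(x)=P_{\mathcal U(x)}(g)$ (independent of $g$). $\nabla_{\mathcal M}f(x)$ is the Riemannian gradient of $f|_{\mathcal M}$. *)

(* Defs.v *)
(* R^n is represented as 'rV[R]_n
   (R : realType), with its standard (product) topology, and the Euclidean
   inner product / norm defined explicitly below. *)
From HB Require Import structures.
From mathcomp Require Import all_boot all_order all_algebra.
From mathcomp Require Import all_classical all_reals all_analysis.
Set Implicit Arguments. Unset Strict Implicit. Unset Printing Implicit Defensive.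
Import Order.TTheory GRing.Theory Num.Theory numFieldNormedType.Exports.
Local Open Scope classical_set_scope.
Local Open Scope ring_scope.

Section Defs.
Context {R : realType} {n : nat}.
Local Notation vec := 'rV[R]_n.

Definition dotv (u v : vec) : R := \sum_(i < n) u ord0 i * v ord0 i.
Definition enorm (u : vec) : R := Num.sqrt (dotv u u).

Definition lin_span (S : set vec) : set vec :=
  [set v | exists m (c : 'I_m -> R) (s : 'I_m -> vec),
     (forall i, S (s i)) /\ v = \sum_(i < m) c i *: s i].
Definition aff_hull (S : set vec) : set vec :=
  [set v | exists m (c : 'I_m -> R) (s : 'I_m -> vec),
     (forall i, S (s i)) /\ \sum_(i < m) c i = 1 /\ v = \sum_(i < m) c i *: s i].
Definition ri (S : set vec) : set vec :=
  [set y | S y /\ exists eps : R, 0 < eps /\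
     forall z, aff_hull S z -> enorm (z - y) < eps -> S z].
Definition par (S : set vec) : set vec :=
  lin_span [set d | exists a b, S a /\ S b /\ d = a - b].
Definition orth (S : set vec) : set vec :=
  [set w | forall v, S v -> dotv w v = 0].

Definition proper_fun (f : vec -> \bar R) : Prop :=
  (forall x, f x != -oo%E) /\ exists x, f x \is a fin_num.
Definition closed_fun (f : vec -> \bar R) : Prop :=
  forall x (a : \bar R), (a < f x)%E -> \forall y \near x, (a < f y)%E.

Definition frechet_subdiff (f : vec -> \bar R) (x v : vec) : Prop :=
  f x \is a fin_num /\
  forall eps : R, 0 < eps -> \forall y \near x,
    (f x + (dotv v (y - x) - eps * enorm (y - x))%:E <= f y)%E.

Definition lim_subdiff (f : vec -> \bar R) (x v : vec) : Prop :=
  f x \is a fin_num /\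
  exists (xk vk : nat -> vec),
    xk @ \oo --> x /\ (fun k => f (xk k)) @ \oo --> f x /\
    (forall k, frechet_subdiff f (xk k) (vk k)) /\ vk @ \oo --> v.

(** Prox-regularity of f at x for vb (vb is assumed to lie in \hat\partial f(x)). *)
Definition prox_regular (f : vec -> \bar R) (x vb : vec) : Prop :=
  exists eps rho : R, 0 < eps /\ 0 <= rho /\
  forall x' x'' v, enorm (x' - x) < eps -> enorm (x'' - x) < eps ->
    frechet_subdiff f x' v -> enorm (v - vb) < eps -> (f x' < f x + eps%:E)%E ->
    (f x' + (dotv v (x'' - x') - rho / 2 * dotv (x'' - x') (x'' - x'))%:E
       <= f x'')%E.

Definition C1_on {V : normedModType R} (U : set vec) (F : vec -> V) : Prop :=
  (forall y, U y -> differentiable F y) /\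
  (forall (v : vec) y, U y -> {for y, continuous (fun z => 'D_v F z)}).

Definition is_chart (M : set vec) (z : vec) (k : nat) (U : set vec)
    (F : vec -> 'rV[R]_k) : Prop :=
  open U /\ U z /\ C1_on U F /\
  (forall w : 'rV[R]_k, exists v, 'D_v F z = w) /\
  (forall y, U y -> (M y <-> F y = 0)).

Definition C1_submanifold (M : set vec) : Prop :=
  forall z, M z -> exists k (U : set vec) (F : vec -> 'rV[R]_k), @is_chart M z k U F.

Definition tangent (M : set vec) (z : vec) : set vec :=
  [set v | exists k (U : set vec) (F : vec -> 'rV[R]_k),
     @is_chart M z k U F /\ 'D_v F z = 0].
Definition normal (M : set vec) (z : vec) : set vec := orth (tangent M z).

Definition restricted_C1 (f : vec -> \bar R) (M : set vec) (x : vec) : Prop :=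
  exists (U : set vec) (ft : vec -> R), open U /\ U x /\ C1_on U ft /\
    forall y, U y -> M y -> f y = (ft y)%:E.

(** v is the Riemannian gradient of f|_M at x (induced metric): v is the
    tangent vector representing the differential of f|_M at x, i.e. the
    projection onto T_x M of the gradient of any local C^1 extension. *)
Definition riem_grad (f : vec -> \bar R) (M : set vec) (x v : vec) : Prop :=
  tangent M x v /\
  exists (U : set vec) (ft : vec -> R), open U /\ U x /\ C1_on U ft /\
    (forall y, U y -> M y -> f y = (ft y)%:E) /\
    forall w, tangent M x w -> dotv v w = 'D_w ft x.

(** V(x) = lin(\partial f(x) - g), U(x) = V(x)^\perp, g_U(x) = P_{U(x)} g. *)
Definition Vspace (f : vec -> \bar R) (x g : vec) : set vec :=
  lin_span [set d | exists y, lim_subdiff f x y /\ d = y - g].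
Definition Uspace (f : vec -> \bar R) (x g : vec) : set vec := orth (Vspace f x g).
Definition gU (f : vec -> \bar R) (x u : vec) : Prop :=
  exists g, lim_subdiff f x g /\ Uspace f x g u /\
    forall w, Uspace f x g w -> dotv (g - u) w = 0.

Definition near_M (M : set vec) (xbar : vec) (P : vec -> Prop) : Prop :=
  exists delta : R, 0 < delta /\
    forall z, M z -> enorm (z - xbar) < delta -> P z.

Definition partly_smooth (f : vec -> \bar R) (M : set vec) (x : vec) : Prop :=
  M x /\
  near_M M x (fun z => (forall v, frechet_subdiff f z v <-> lim_subdiff f z v) /\
                        exists v, lim_subdiff f z v) /\
  restricted_C1 f M x /\
  par (lim_subdiff f x) = normal M x /\
  (forall y, lim_subdiff f x y -> forall xr : nat -> vec,
     (forall r, M (xr r)) -> xr @ \oo --> x ->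
     exists yr : nat -> vec, (forall r, lim_subdiff f (xr r) (yr r)) /\ yr @ \oo --> y).

End Defs.

(* Main.v *)
Require Import Defs.
From HB Require Import structures.
From mathcomp Require Import all_boot all_order all_algebra.
From mathcomp Require Import all_classical all_reals all_analysis.
From mathcomp Require Import ring lra.
Import Order.TTheory GRing.Theory Num.Theory numFieldNormedType.Exports.
Local Open Scope classical_set_scope.
Local Open Scope ring_scope.

HB.instance Definition _ (R : realType) (k : nat) := NormedModule.on 'rV[R]_k.

Section Basics.
Context {R : realType}.

Lemma mxnorm_ge_entry {m p} (M : 'M[R]_(m,p)) i j : `|M i j| <= `|M|.
Proof.
rewrite [leRHS]/Num.Def.normr/= mx_normrE.
by apply: le_trans; last exact: (le_bigmax _ _ (i, j)).
Qed.

Lemma mxnorm_le {m p} (M : 'M[R]_(m,p)) c : 0 <= c ->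
  (forall i j, `|M i j| <= c) -> `|M| <= c.
Proof.
move=> c0 H; rewrite [leLHS]/Num.Def.normr/= mx_normrE.
by apply: bigmax_le => // -[i j] _; exact: H.
Qed.

Definition mxsz {a b} (M : 'M[R]_(a,b)) : R := \sum_i \sum_j `|M i j|.

Lemma mxsz_ge0 {a b} (M : 'M[R]_(a,b)) : 0 <= mxsz M.
Proof. by apply: sumr_ge0 => i _; apply: sumr_ge0. Qed.

Lemma norm_mulmx_le {a b} (u : 'rV[R]_a) (M : 'M[R]_(a,b)) :
  `|u *m M| <= mxsz M * `|u|.
Proof.
apply: mxnorm_le; first by rewrite mulr_ge0 ?mxsz_ge0.
move=> i j; rewrite mxE.
apply: (le_trans (ler_norm_sum _ _ _)).
rewrite /mxsz mulr_suml; apply: ler_sum => l _.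
rewrite normrM mulrC; apply: ler_pM => //.
  rewrite (bigD1 j) //= lerDl; apply: sumr_ge0 => *; done.
by rewrite (ord1 i); apply: mxnorm_ge_entry.
Qed.

Context {n : nat}.
Local Notation vec := 'rV[R]_n.

Lemma dotvE (u v : vec) : dotv u v = (u *m v^T) 0 0.
Proof. by rewrite /dotv mxE; apply: eq_bigr => i _; rewrite mxE. Qed.

Lemma dotvC (u v : vec) : dotv u v = dotv v u.
Proof. by rewrite /dotv; apply: eq_bigr => i _; rewrite mulrC. Qed.

Lemma dotvDl (u u' v : vec) : dotv (u + u') v = dotv u v + dotv u' v.
Proof. by rewrite /dotv -big_split; apply: eq_bigr => i _; rewrite mxE mulrDl. Qed.

Lemma dotvNl (u v : vec) : dotv (- u) v = - dotv u v.
Proof. by rewrite /dotv -sumrN; apply: eq_bigr => i _; rewrite mxE mulNr. Qed.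

Lemma dotvBl (u u' v : vec) : dotv (u - u') v = dotv u v - dotv u' v.
Proof. by rewrite dotvDl dotvNl. Qed.

Lemma dotvZl a (u v : vec) : dotv (a *: u) v = a * dotv u v.
Proof. by rewrite /dotv mulr_sumr; apply: eq_bigr => i _; rewrite mxE mulrA. Qed.

Lemma dotvDr (u u' v : vec) : dotv v (u + u') = dotv v u + dotv v u'.
Proof. by rewrite !(dotvC v) dotvDl. Qed.
Lemma dotvNr (u v : vec) : dotv v (- u) = - dotv v u.
Proof. by rewrite !(dotvC v) dotvNl. Qed.
Lemma dotvBr (u u' v : vec) : dotv v (u - u') = dotv v u - dotv v u'.
Proof. by rewrite !(dotvC v) dotvBl. Qed.
Lemma dotvZr a (u v : vec) : dotv v (a *: u) = a * dotv v u.
Proof. by rewrite !(dotvC v) dotvZl. Qed.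
Lemma dotv0r (v : vec) : dotv v 0 = 0.
Proof. by rewrite /dotv big1 // => i _; rewrite mxE mulr0. Qed.

Lemma dotv_self0 (u : vec) : dotv u u = 0 -> u = 0.
Proof.
move=> /eqP; rewrite /dotv psumr_eq0; last by move=> i _; rewrite -expr2 sqr_ge0.
move=> /allP H; apply/rowP => i; rewrite mxE.
have := H i (mem_index_enum i); rewrite /= mulf_eq0 orbb => /eqP //.
Qed.

Lemma dotv_bound (g r : vec) : `|dotv g r| <= (\sum_i `|g 0 i|) * `|r|.
Proof.
apply: (le_trans (ler_norm_sum _ _ _)); rewrite mulr_suml; apply: ler_sum => i _.
by rewrite normrM; apply: ler_pM => //; apply: mxnorm_ge_entry.
Qed.

Lemma dotv_mulmx {k} (u : 'rV[R]_k) (B : 'M[R]_(k, n)) (v : vec) :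
  dotv (u *m B) v = (u *m (v *m B^T)^T) 0 0.
Proof. by rewrite dotvE trmx_mul trmxK mulmxA. Qed.

Lemma enorm0 : enorm (0 : vec) = 0.
Proof.
rewrite /enorm /dotv big1 ?sqrtr0 // => i _; by rewrite mxE mul0r.
Qed.

Lemma enorm_le (u : vec) : enorm u <= n%:R * `|u|.
Proof.
rewrite /enorm -(@ger0_norm _ (n%:R * `|u|)) ?mulr_ge0 //.
rewrite -sqrtr_sqr ler_sqrt; last by rewrite sqr_ge0.
apply: (@le_trans _ _ (\sum_(i < n) `|u|^+2)).
  apply: ler_sum => i _; rewrite -expr2 -real_normK ?num_real //.
  by rewrite lerXn2r ?nnegrE ?normr_ge0 //; apply: mxnorm_ge_entry.
rewrite sumr_const card_ord exprMn -[leLHS]mulr_natl.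
apply: ler_wpM2r; first by rewrite sqr_ge0.
by rewrite -natrX ler_nat; case: n => // m; rewrite expnS leq_pmulr // expn_gt0.
Qed.

Lemma near_ball (x : vec) (P : vec -> Prop) :
  (\forall y \near x, P y) -> exists r, 0 < r /\ forall y, `|y - x| < r -> P y.
Proof.
move=> /nbhs_ballP [r r0 H]; exists r; split => // y yr; apply: H.
by rewrite -ball_normE /= distrC.
Qed.

Lemma is_derive_seg k (F : vec -> 'rV[R]_k) (d q : vec) (i : 'I_k) t :
  differentiable F (t *: d + q) ->
  is_derive t 1 (fun s : R => F (s *: d + q) 0 i) (('D_d F (t *: d + q)) 0 i).
Proof.
move=> H; set z := t *: d + q.
have dF : derivable F z d by apply: diff_derivable.
have dG : derivable (fun y => F y 0 i) z d by move/derivable_mxP: dF => /(_ 0 i).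
have E : 'D_d F z 0 i = 'D_d (fun y => F y 0 i) z by rewrite derive_mx // mxE.
have Q : (fun h : R => h^-1 *: (((fun s => F (s *: d + q) 0 i) \o shift t) (h *: 1)
     - F (t *: d + q) 0 i)) =
   (fun h : R => h^-1 *: (((fun y => F y 0 i) \o shift z) (h *: d) - F z 0 i)).
  apply: funext => h; rewrite /= /z; congr (_ *: (_ - _)).
  by rewrite [h *: 1]mulr1 scalerDl addrA.
apply: DeriveDef; first by rewrite /derivable Q.
by rewrite E /derive Q.
Qed.

Lemma jac_entry k (F : vec -> 'rV[R]_k) z l i :
  differentiable F z -> jacobian F z l i = ('D_('e_l) F z) 0 i.
Proof. by move=> dF; rewrite deriveE // /jacobian mxE. Qed.

Lemma conv_lt (t a b r : R) : 0 <= t <= 1 -> a < r -> b < r -> t * a + (1 - t) * b < r.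
Proof.
move=> /andP[t0 t1] ar br.
have h1 : t * a <= t * Num.max a b by rewrite ler_wpM2l // le_max lexx.
have h2 : (1 - t) * b <= (1 - t) * Num.max a b by rewrite ler_wpM2l ?subr_ge0 // le_max lexx orbT.
have h3 : Num.max a b < r by rewrite gt_max ar br.
lra.
Qed.

Lemma SD k (U : set vec) (F : vec -> 'rV[R]_k) x : open U -> U x -> C1_on U F ->
  forall eta, 0 < eta -> exists r, 0 < r /\ (forall p, `|p - x| < r -> U p) /\
  forall p q, `|p - x| < r -> `|q - x| < r ->
    `|F p - F q - (p - q) *m jacobian F x| <= eta * `|p - q|.
Proof.
move=> oU Ux [dF cF] eta eta0.
pose e' := eta / (n%:R + 1).
have e'0 : 0 < e' by rewrite divr_gt0 // ltr_wpDl.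
have [r1 [r10 H1]] : exists r, 0 < r /\ forall y, `|y - x| < r -> U y.
  by apply: near_ball; apply: open_nbhs_nbhs; split.
have [r2 [r20 H2]] : exists r, 0 < r /\ forall y, `|y - x| < r ->
    forall j : 'I_n, `|'D_('e_j) F x - 'D_('e_j) F y| < e'.
  apply: near_ball.
  have := @filter_forall _ 'I_n (fun j y => `|'D_('e_j) F x - 'D_('e_j) F y| < e') (nbhs x) _.
  apply => j.
  by have /cvgrPdist_lt /(_ e' e'0) := cF ('e_j) x Ux.
exists (Num.min r1 r2); split; first by rewrite lt_min r10.
split; first by move=> p; rewrite lt_min => /andP [/H1].
move=> p q; rewrite !lt_min => /andP[pr1 pr2] /andP[qr1 qr2].
set d := p - q.
apply: mxnorm_le; first by rewrite mulr_ge0 // ltW.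
move=> i0 i; rewrite (ord1 i0) => {i0}.
have seg t : 0 <= t <= 1 -> `|t *: d + q - x| < r1 /\ `|t *: d + q - x| < r2.
  move=> /[dup] t01 /andP[t0 t1].
  have -> : t *: d + q - x = t *: (p - x) + (1 - t) *: (q - x).
    by apply/rowP => j; rewrite /d !mxE; ring.
  have nle : `|t *: (p - x) + (1 - t) *: (q - x)| <= t * `|p - x| + (1 - t) * `|q - x|.
    apply: (le_trans (ler_normD _ _)); rewrite !normrZ !ger0_norm ?subr_ge0 //.
  by split; apply: le_lt_trans nle _; apply: conv_lt.
pose psi := fun s : R => F (s *: d + q) 0 i.
pose dpsi := fun s : R => ('D_d F (s *: d + q)) 0 i.
have dUs s : 0 <= s <= 1 -> differentiable F (s *: d + q).
  by move=> /seg [/H1 /dF]. 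
have [c c01 E] : exists2 c, c \in `[0, 1]%R & psi 1 - psi 0 = dpsi c * (1 - 0).
  apply: MVT_segment => //.
    move=> s; rewrite in_itv /= => /andP[s0 s1]; apply: is_derive_seg.
    by apply: dUs; rewrite !ltW.
  apply: continuous_subspace_itv => s; rewrite in_itv /= => s01.
  apply: differentiable_continuous; apply/derivable1_diffP.
  by have [] := @is_derive_seg _ F d q i s (dUs s s01).
move: c01; rewrite in_itv /= => c01.
have dz := dUs c c01.
have E2 : F p 0 i - F q 0 i = ('D_d F (c *: d + q)) 0 i.
  by move: E; rewrite /psi /dpsi subr0 mulr1 scale1r scale0r add0r /d subrK.
have -> : (F p - F q - d *m 'J F x) 0 i = F p 0 i - F q 0 i - (d *m 'J F x) 0 i.
  by rewrite !mxE.
rewrite E2 deriveEjacobian //.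
have E1 l := @jac_entry _ F _ l i dz.
have E3 l := @jac_entry _ F _ l i (dF x Ux).
move: E1 E3; move: ('J F (c *: d + q)) ('J F x) => Jz Jx E1 E3.
have Hj : forall l, `|Jz l i - Jx l i| <= e'.
  move=> l; rewrite E1 E3.
  have := mxnorm_ge_entry ('D_('e_l) F x - 'D_('e_l) F (c *: d + q)) 0 i.
  rewrite !mxE distrC => /le_trans; apply.
  by apply: ltW; apply: H2; case: (seg c c01).
have -> : (d *m Jz) 0 i - (d *m Jx) 0 i = \sum_l d 0 l * (Jz l i - Jx l i).
  by rewrite !mxE -sumrB; apply: eq_bigr => l _; rewrite mulrBr.
apply: (le_trans (ler_norm_sum _ _ _)).
apply: (@le_trans _ _ (\sum_(l < n) `|d| * e')).
  apply: ler_sum => l _; rewrite normrM; apply: ler_pM => //.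
  exact: mxnorm_ge_entry.
have he : e' * n%:R <= eta.
  rewrite /e' mulrAC ler_pdivrMr ?ltr_wpDl // ler_wpM2l ?ltW //.
  by rewrite ?ltrDl ?lerDl ?ltr01 ?ler01.
rewrite sumr_const card_ord -mulr_natr -mulrA [X in X <= _]mulrC.
by apply: ler_wpM2r.
Qed.

Lemma minr_l (a b : R) : Num.min a b <= a. Proof. by rewrite ge_min lexx. Qed.
Lemma minr_r (a b : R) : Num.min a b <= b. Proof. by rewrite ge_min lexx orbT. Qed.

Lemma right_inv k (J : 'M[R]_(n, k)) : (forall z : 'rV[R]_k, exists v, v *m J = z) ->
  exists B : 'M[R]_(k, n), B *m J = 1%:M.
Proof.
move=> surj.
exists (\matrix_(j, l) (sval (cid (surj 'e_j))) 0 l).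
apply/row_matrixP => j; rewrite row_mul row1.
have -> : row j (\matrix_(j, l) (sval (cid (surj 'e_j))) 0 l) = sval (cid (surj 'e_j)).
  by apply/rowP => l; rewrite !mxE.
exact: svalP (cid (surj 'e_j)).
Qed.

Lemma LY k (U : set vec) (F : vec -> 'rV[R]_k) x : open U -> U x -> C1_on U F ->
  F x = 0 ->
  (forall z : 'rV[R]_k, exists v, v *m jacobian F x = z) ->
  forall w, w *m jacobian F x = 0 ->
  forall eps del, 0 < eps -> 0 < del ->
  exists t y, [/\ 0 < t, t < del, U y, F y = 0 & `|y - x - t *: w| <= eps * t].
Proof.
move=> oU Ux C1 Fx0 surj w wJ eps del eps0 del0.
have [B BJ] := @right_inv k (jacobian F x) surj.
move: BJ wJ; move: (jacobian F x) (@SD k U F x oU Ux C1) => J SDJ BJ wJ.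
have uBJ (u : 'rV[R]_k) : u *m B *m J = u by rewrite -mulmxA BJ mulmx1.
pose cB := mxsz B + 1.
have cB0 : 0 < cB by rewrite ltr_wpDl ?mxsz_ge0.
have nB (u : 'rV[R]_k) : `|u *m B| <= cB * `|u|.
  apply: (le_trans (norm_mulmx_le _ _)); apply: ler_wpM2r => //.
  by rewrite lerDl.
pose a := `|w| + 1.
have a0 : 0 < a by rewrite ltr_wpDl.
pose eta := Num.min (1 / (2 * cB)) (eps / (2 * cB * a)).
have eta0 : 0 < eta by rewrite lt_min !divr_gt0 ?mulr_gt0.
have etacB : eta * cB <= 1 / 2.
  have h : eta * cB <= 1 / (2 * cB) * cB by apply: ler_wpM2r; [exact: ltW | exact: minr_l].
  have e : 1 / (2 * cB) * cB = 1 / 2 by field; rewrite gt_eqF.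
  by rewrite -e.
have etaeps : 2 * cB * eta * a <= eps.
  have h : eta * (2 * cB * a) <= eps / (2 * cB * a) * (2 * cB * a).
    by apply: ler_wpM2r; [rewrite ltW // !mulr_gt0 | exact: minr_r].
  have e : eps / (2 * cB * a) * (2 * cB * a) = eps.
    by field; rewrite !gt_eqF.
  lra.
have [r [r0 [rU SDr]]] := SDJ eta eta0.
pose t := Num.min (del / 2) (r / (4 * a)).
have t0 : 0 < t by rewrite lt_min !divr_gt0 ?mulr_gt0.
have tdel : t < del.
  have : t <= del / 2 by apply: minr_l.
  lra.
have tr : 2 * t * a < r.
  have h : t * (4 * a) <= r / (4 * a) * (4 * a).
    by apply: ler_wpM2r; [rewrite ltW // mulr_gt0 | exact: minr_r].
  have e : r / (4 * a) * (4 * a) = r by field; rewrite !gt_eqF.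
  have ta0 : 0 < t * a by rewrite mulr_gt0.
  lra.
pose rho := 2 * eta * t * a.
have rho0 : 0 < rho by rewrite !mulr_gt0.
have sB (s : 'rV[R]_k) : `|s| <= rho -> `|s *m B| <= t * a.
  move=> sr; apply: (le_trans (nB s)).
  have h : cB * `|s| <= cB * rho by apply: ler_wpM2l; [exact: ltW |].
  have h2 : (eta * cB) * (t * a) <= 1 / 2 * (t * a).
    by apply: ler_wpM2r; [rewrite ltW // mulr_gt0 |].
  rewrite /rho in h; lra.
pose P (s : 'rV[R]_k) := x + t *: w + s *m B.
have Pnear (s : 'rV[R]_k) : `|s| <= rho -> `|P s - x| < r.
  move=> sr; have -> : P s - x = t *: w + s *m B.
    by apply/rowP => j; rewrite /P !mxE; ring.
  apply: (le_lt_trans (ler_normD _ _)); rewrite normrZ (gtr0_norm t0).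
  have h1 : t * `|w| <= t * a by apply: ler_wpM2l; [exact: ltW | rewrite lerDl].
  have h2 := sB s sr.
  lra.
have PxE (s : 'rV[R]_k) : P s - x = t *: w + s *m B.
  by apply/rowP => j; rewrite /P !mxE; ring.
have PJ (s : 'rV[R]_k) : (P s - x) *m J = s.
  by rewrite PxE mulmxDl -scalemxAl wJ scaler0 add0r uBJ.
pose Phi (s : 'rV[R]_k) := s - F (P s).
pose S := closed_ball_ Num.norm (0 : 'rV[R]_k) rho.
have SE (s : 'rV[R]_k) : S s = (`|s| <= rho).
  by rewrite /S /closed_ball_ /= sub0r normrN.
have key (s : 'rV[R]_k) : Phi s = - (F (P s) - F x - (P s - x) *m J).
  by rewrite PJ Fx0 subr0 opprB.
have PS : {homo Phi : s / S s >-> S s}.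
  move=> s; rewrite !SE => sr; rewrite key normrN.
  have xr : `|x - x| < r by rewrite subrr normr0.
  apply: (le_trans (SDr _ _ (Pnear s sr) xr)).
  have h0 : `|P s - x| <= t * `|w| + cB * `|s|.
    rewrite PxE; apply: (le_trans (ler_normD _ _)).
    by rewrite normrZ (gtr0_norm t0) lerD2l.
  have h1 : eta * `|P s - x| <= eta * (t * `|w| + cB * `|s|).
    by apply: ler_wpM2l; [exact: ltW |].
  have h2 : eta * (t * `|w|) <= eta * (t * a).
    apply: ler_wpM2l; [exact: ltW |]; apply: ler_wpM2l; [exact: ltW |].
    by rewrite lerDl.
  have h3 : (eta * cB) * `|s| <= (1 / 2) * rho.
    apply: (@le_trans _ _ ((eta * cB) * rho)).
      by apply: ler_wpM2l; [rewrite mulr_ge0 // ltW |].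
    by apply: ler_wpM2r; [exact: ltW |].
  rewrite /rho in h3 *; lra.
have contr (s s' : 'rV[R]_k) : S s -> S s' -> `|Phi s - Phi s'| <= 2^-1 * `|s - s'|.
  rewrite !SE => sr s'r.
  have -> : Phi s - Phi s' = - (F (P s) - F (P s') - (P s - P s') *m J).
    have -> : P s - P s' = (P s - x) - (P s' - x) by rewrite opprB addrA subrK.
    by rewrite mulmxBl !PJ /Phi; apply/rowP => j; rewrite !mxE; ring.
  rewrite normrN; apply: (le_trans (SDr _ _ (Pnear s sr) (Pnear s' s'r))).
  have -> : P s - P s' = (s - s') *m B.
    by rewrite mulmxBl; apply/rowP => j; rewrite /P !mxE; ring.
  have h : eta * `|(s - s') *m B| <= eta * (cB * `|s - s'|).
    by apply: ler_wpM2l; [exact: ltW | exact: nB].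
  have h' : (eta * cB) * `|s - s'| <= 1 / 2 * `|s - s'|.
    by apply: ler_wpM2r.
  lra.
have S0 : S 0 by rewrite SE normr0 ltW.
have clS : closed S by apply: closed_closed_ball_.
have ctr : is_contraction (mkfun_fun PS).
  exists (2^-1)%:nng; split; first by rewrite /= invf_lt1 ?ltr1n.
  move=> [s s'] [/= Ss Ss'].
  exact: contr.
have [p Sp pE] := banach_fixed_point ctr clS (ex_intro _ 0 S0).
move: Sp; rewrite SE => Sp.
have pE' : p = Phi p := pE.
have FP : F (P p) = 0.
  have : F (P p) = p - Phi p by rewrite /Phi opprB addrC subrK.
  by rewrite -pE' subrr.
exists t, (P p); split => //.
  by apply: rU; apply: Pnear.
have -> : P p - x - t *: w = p *m B by rewrite PxE addrAC subrr add0r.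
apply: (le_trans (nB p)).
have h : cB * `|p| <= cB * rho by apply: ler_wpM2l; [exact: ltW |].
have h2 : 2 * cB * eta * a * t <= eps * t by apply: ler_wpM2r; [exact: ltW |].
rewrite /rho in h; lra.
Qed.




Lemma le0_small (a K : R) : 0 < K -> (forall e, 0 < e -> e <= 1 -> a <= e * K) -> a <= 0.
Proof.
move=> K0 H; rewrite leNgt; apply/negP => a0.
pose e := Num.min 1 (a / (2 * K)).
have e0 : 0 < e by rewrite lt_min ltr01 divr_gt0 ?mulr_gt0.
have h := H e e0 (minr_l _ _).
have h2 : e * K <= a / (2 * K) * K by apply: ler_wpM2r; [exact: ltW | exact: minr_r].
have h3 : a / (2 * K) * K = a / 2 by field; rewrite gt_eqF.
lra.
Qed.

Lemma chart_LY (M : set vec) x k U (F : vec -> 'rV[R]_k) : @is_chart _ _ M x k U F -> M x ->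
  forall w, 'D_w F x = 0 -> forall eps del, 0 < eps -> 0 < del ->
  exists t y, [/\ 0 < t, t < del, M y & `|y - x - t *: w| <= eps * t].
Proof.
move=> [oU [Ux [C1 [surj MF]]]] Mx w Dw eps del e0 d0.
have dFx : differentiable F x := C1.1 x Ux.
have Fx0 : F x = 0 by apply/(MF x Ux).
have surj' : forall z : 'rV[R]_k, exists v, v *m 'J F x = z.
  by move=> z; have [v <-] := surj z; exists v; rewrite deriveEjacobian.
have wJ : w *m 'J F x = 0 by rewrite -deriveEjacobian.
have [t [y [t0 tdel Uy Fy yw]]] := @LY k U F x oU Ux C1 Fx0 surj' w wJ eps del e0 d0.
by exists t, y; split => //; apply/(MF y Uy).
Qed.

Lemma tangent_char (M : set vec) x k U (F : vec -> 'rV[R]_k) : @is_chart _ _ M x k U F -> M x ->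
  forall v, tangent M x v <-> v *m 'J F x = 0.
Proof.
move=> ch Mx v; have [oU [Ux [C1 [surj MF]]]] := ch.
have dFx : differentiable F x := C1.1 x Ux.
split; last first.
  by move=> vJ; exists k, U, F; split => //; rewrite deriveEjacobian.
move=> [k2 [U2 [F2 [ch2 Dv]]]].
have Fx0 : F x = 0 by apply/(MF x Ux).
move: (@SD k U F x oU Ux C1); move: ('J F x) => J SDJ.
apply/eqP; rewrite -normr_le0.
pose cJ := mxsz J + 1.
have cJ0 : 0 < cJ by rewrite ltr_wpDl ?mxsz_ge0.
have v0 : 0 < `|v| + 1 by rewrite ltr_wpDl.
apply: (@le0_small _ (`|v| + 1 + cJ)); first by rewrite addr_gt0.
move=> e e0 e1.
have [r [r0 [rU SDr]]] := SDJ e e0.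
have del0 : 0 < r / (2 * (`|v| + 1)) by rewrite divr_gt0 ?mulr_gt0.
have [t [y [t0 tdel My yv]]] := @chart_LY M x k2 U2 F2 ch2 Mx v Dv _ _ e0 del0.
have yx : `|y - x| <= t * (`|v| + 1).
  have -> : y - x = t *: v + (y - x - t *: v) by rewrite addrCA subrr addr0.
  apply: (le_trans (ler_normD _ _)); rewrite normrZ (gtr0_norm t0).
  have : e * t <= t by rewrite ler_piMl // ltW.
  lra.
have yr : `|y - x| < r.
  have h : t * (2 * (`|v| + 1)) < r / (2 * (`|v| + 1)) * (2 * (`|v| + 1)).
    by rewrite ltr_pM2r // mulr_gt0.
  have h3 : r / (2 * (`|v| + 1)) * (2 * (`|v| + 1)) = r by field; rewrite gt_eqF // mulr_gt0.
  have : 0 < t * (`|v| + 1) by rewrite mulr_gt0.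
  lra.
have Fy0 : F y = 0 by apply/(MF y (rU y yr)).
have xr : `|x - x| < r by rewrite subrr normr0.
have := SDr y x yr xr; rewrite Fy0 Fx0 subrr sub0r normrN => hJ.
have E : t *: (v *m J) = (y - x) *m J - (y - x - t *: v) *m J.
  by rewrite -mulmxBl opprB addrC subrK scalemxAl.
have h1 : t * `|v *m J| <= e * `|y - x| + cJ * (e * t).
  rewrite -[X in X * _](gtr0_norm t0) -normrZ E; apply: (le_trans (ler_normB _ _)).
  apply: lerD => //; apply: (le_trans (norm_mulmx_le _ _)).
  apply: (@le_trans _ _ (cJ * `|y - x - t *: v|)).
    by apply: ler_wpM2r; [exact: normr_ge0 | rewrite /cJ lerDl].
  by apply: ler_wpM2l; [exact: ltW|].
have h2 : e * `|y - x| <= e * (t * (`|v| + 1)) by apply: ler_wpM2l; [exact: ltW|].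
have : t * `|v *m J| <= t * (e * (`|v| + 1 + cJ)) by lra.
by rewrite ler_pM2l.
Qed.

Lemma derive_dotv (f : vec -> R) x : differentiable f x ->
  forall w, 'D_w f x = dotv (\row_i 'D_('e_i) f x) w.
Proof.
move=> df w; rewrite deriveE // {1}(row_sum_delta w) linear_sum /dotv.
apply: eq_bigr => i _; rewrite linearZ /= -deriveE // mxE mulrC.
by [].
Qed.

Lemma diff_est {W : normedModType R} (f : vec -> W) x : differentiable f x ->
  forall eps, 0 < eps -> exists r, 0 < r /\ forall y, `|y - x| < r ->
    `|f y - f x - 'd f x (y - x)| <= eps * `|y - x|.
Proof.
move=> df eps e0.
have := diff_locally df; move/eqaddoP => /(_ eps e0) /near_ball [r [r0 H]].
exists r; split => // y yx.
have := H (y - x); rewrite subr0 => /(_ yx).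
move=> h; apply: le_trans h; rewrite le_eqVlt; apply/orP; left; apply/eqP; congr (`|_|).
by rewrite !fctE /= subrK opprD addrA.
Qed.

Lemma claimA_le (f : vec -> \bar R) (M : set vec) x k U (F : vec -> 'rV[R]_k) g
    (U' : set vec) (ft : vec -> R) :
  @is_chart _ _ M x k U F -> M x -> frechet_subdiff f x g ->
  open U' -> U' x -> differentiable ft x -> (forall y, U' y -> M y -> f y = (ft y)%:E) ->
  forall w, 'D_w F x = 0 -> dotv g w <= 'D_w ft x.
Proof.
move=> ch Mx [fxfin frech] oU' U'x dft fM w Dw.
rewrite (@derive_dotv ft x dft) -subr_le0 -dotvBl.
set gam := \row_i 'D_('e_i) ft x.
set d := g - gam.
pose Kd := \sum_i `|d 0 i|.
pose nw := `|w| + 1.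
have Kd0 : 0 <= Kd by apply: sumr_ge0.
have nw0 : 0 < nw by rewrite ltr_wpDl.
apply: (@le0_small _ (Kd + (n%:R + 1) * nw + 1)).
  by rewrite ltr_wpDl // addr_ge0 // mulr_ge0 // ltW.
move=> e e0 e1.
have [r1 [r10 H1]] := near_ball _ _ (frech e e0).
have [r2 [r20 H2]] := @diff_est _ ft x dft e e0.
have [r3 [r30 H3]] : exists r, 0 < r /\ forall y, `|y - x| < r -> U' y.
  by apply: near_ball; apply: open_nbhs_nbhs; split.
pose r := Num.min r1 (Num.min r2 r3).
have r0 : 0 < r by rewrite !lt_min r10 r20 r30.
have del0 : 0 < r / (2 * nw) by rewrite divr_gt0 ?mulr_gt0.
have [t [y [t0 tdel My yw]]] := @chart_LY M x k U F ch Mx w Dw _ _ e0 del0.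
have yx : `|y - x| <= t * nw.
  have -> : y - x = t *: w + (y - x - t *: w) by rewrite addrCA subrr addr0.
  apply: (le_trans (ler_normD _ _)); rewrite normrZ (gtr0_norm t0).
  have : e * t <= t by rewrite ler_piMl // ltW.
  rewrite /nw; lra.
have yr : `|y - x| < r.
  have h : t * (2 * nw) < r / (2 * nw) * (2 * nw).
    by rewrite ltr_pM2r // mulr_gt0.
  have h3 : r / (2 * nw) * (2 * nw) = r by field; rewrite gt_eqF // mulr_gt0.
  have : 0 < t * nw by rewrite mulr_gt0.
  lra.
move: yr; rewrite !lt_min => /andP [yr1 /andP [yr2 yr3]].
have fy := fM y (H3 y yr3) My.
have fx := fM x U'x Mx.
have h1 := H1 y yr1; rewrite fy fx -EFinD lee_fin in h1.
have h2 := H2 y yr2; rewrite -deriveE // (@derive_dotv ft x dft) -/gam in h2.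
have h2' := le_trans (ler_norm _) h2.
have h3 := enorm_le (y - x).
have E : dotv d (y - x) = t * dotv d w + dotv d (y - x - t *: w).
  by rewrite -dotvZr -dotvDr addrCA subrr addr0.
have E2 : dotv d (y - x) = dotv g (y - x) - dotv gam (y - x) by rewrite dotvBl.
have h4 := le_trans (ler_norm _) (dotv_bound d (y - x - t *: w)).
rewrite -/Kd in h4.
have h5 : - dotv d (y - x - t *: w) <= Kd * `|y - x - t *: w|.
  by apply: (le_trans (ler_norm _)); rewrite normrN; apply: dotv_bound.
have G1 : e * enorm (y - x) <= e * (n%:R * (t * nw)).
  apply: ler_wpM2l; [exact: ltW|]; apply: (le_trans h3).
  by apply: ler_wpM2l.
have G2 : e * `|y - x| <= e * (t * nw) by apply: ler_wpM2l; [exact: ltW|].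
have G3 : Kd * `|y - x - t *: w| <= Kd * (e * t) by apply: ler_wpM2l.
have te : 0 <= t * e by rewrite mulr_ge0 // ltW.
have : t * dotv d w <= t * (e * (Kd + (n%:R + 1) * nw + 1)) by lra.
by rewrite ler_pM2l.
Qed.

Lemma claimA (f : vec -> \bar R) (M : set vec) x k U (F : vec -> 'rV[R]_k) g
    (U' : set vec) (ft : vec -> R) :
  @is_chart _ _ M x k U F -> M x -> frechet_subdiff f x g ->
  open U' -> U' x -> differentiable ft x -> (forall y, U' y -> M y -> f y = (ft y)%:E) ->
  forall w, 'D_w F x = 0 -> dotv g w = 'D_w ft x.
Proof.
move=> ch Mx fr oU' U'x dft fM w Dw.
have dF : differentiable F x by have [_ [Ux [[dF _] _]]] := ch; apply: dF.
apply/eqP; rewrite eq_le (@claimA_le f M x k U F g U' ft ch Mx fr oU' U'x dft fM w Dw) /=.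
have Dw' : 'D_(- w) F x = 0.
  by rewrite deriveEjacobian // mulNmx -deriveEjacobian // Dw oppr0.
have := @claimA_le f M x k U F g U' ft ch Mx fr oU' U'x dft fM (- w) Dw'.
by rewrite !(@derive_dotv ft x dft) !dotvNr lerN2.
Qed.

Lemma proj_exists k (J : 'M[R]_(n, k)) : (exists B : 'M[R]_(k, n), B *m J = 1%:M) ->
  forall w : vec, exists p, p *m J = 0 /\ forall v, v *m J = 0 -> dotv (w - p) v = 0.
Proof.
move=> [B BJ] w.
pose G := J^T *m J.
have inj (u : 'rV[R]_k) : u *m G = 0 -> u = 0.
  move=> uG.
  have a0 : u *m J^T = 0.
    apply: dotv_self0; rewrite dotvE trmx_mul trmxK !mulmxA -(mulmxA u) -/G uG.
    by rewrite mul0mx mxE.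
  have : u = u *m (J^T *m B^T) by rewrite -trmx_mul BJ trmx1 mulmx1.
  by rewrite mulmxA a0 mul0mx.
have Gu : G \in unitmx.
  rewrite -row_free_unit -kermx_eq0 -submx0; apply/row_subP => i.
  have h : row i (kermx G) *m G = 0 by apply/sub_kermxP; apply: row_sub.
  by rewrite (inj _ h) sub0mx.
exists (w - (w *m J) *m invmx G *m J^T); split.
  by rewrite mulmxBl -!mulmxA -/G mulVmx // mulmx1 subrr.
move=> v vJ.
rewrite opprB addrC subrK dotv_mulmx trmxK vJ trmx0 mulmx0 mxE.
by [].
Qed.

Lemma dotv_sumr (w : vec) m (h : 'I_m -> vec) :
  dotv w (\sum_(i < m) h i) = \sum_(i < m) dotv w (h i).
Proof.
by apply: (big_morph (dotv w)); [move=> a b; rewrite dotvDr | rewrite dotv0r].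
Qed.

Lemma lin_span1 (S : set vec) s : S s -> lin_span S s.
Proof.
move=> Ss; exists 1%N, (fun _ => 1), (fun _ => s); split => //.
by rewrite big_ord1 scale1r.
Qed.
End Basics.

Theorem proposition5 (R : realType) (n : nat) (f : 'rV[R]_n -> \bar R)
    (M : set 'rV[R]_n) (xbar : 'rV[R]_n) :
  proper_fun f -> closed_fun f ->
  C1_submanifold M -> M xbar ->
  near_M M xbar (partly_smooth f M) ->
  near_M M xbar (fun z => forall vb, frechet_subdiff f z vb -> prox_regular f z vb) ->
  (exists u, gU f xbar u /\ ri (lim_subdiff f xbar) u) ->
  near_M M xbar (fun x =>
    (exists v, riem_grad f M x v) /\ (exists u, gU f x u) /\
    forall v u, riem_grad f M x v -> gU f x u -> v = u).
Proof.
move=> _ _ C1M _ [delta [d0 PS]] _ _.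
exists delta; split => // x Mx xd.
have [_ [reg [rC1 [sharp _]]]] := PS x Mx xd.
have [regx [g0 g0l]] : (forall v, frechet_subdiff f x v <-> lim_subdiff f x v) /\
    exists v, lim_subdiff f x v.
  have [d' [d'0 H]] := reg; apply: H => //.
  by rewrite subrr enorm0.
have [k [U [F ch]]] := C1M x Mx.
have [oU [Ux [C1 [surj MF]]]] := ch.
have dF : differentiable F x := C1.1 x Ux.
have Tchar := @tangent_char R n M x k U F ch Mx.
have surj' : forall z : 'rV[R]_k, exists v, v *m 'J F x = z.
  by move=> z; have [v <-] := surj z; exists v; rewrite deriveEjacobian.
have BJ := @right_inv R n k ('J F x) surj'.
have proj := @proj_exists R n k ('J F x) BJ.
have Dchar (w : 'rV[R]_n) : 'D_w F x = 0 <-> w *m 'J F x = 0.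
  by rewrite deriveEjacobian.
move: Tchar proj Dchar; move: ('J F x) => J Tchar proj Dchar.
have normalE (r : 'rV[R]_n) : normal M x r <-> forall v, v *m J = 0 -> dotv r v = 0.
  split => [H v vJ|H v /Tchar]; first by apply: H; apply/Tchar.
  exact: H.
have Uchar (g : 'rV[R]_n) : lim_subdiff f x g -> forall w, Uspace f x g w <-> w *m J = 0.
  move=> gl w; split.
    move=> wU.
    have [p [pJ pperp]] := proj w.
    have rN : normal M x (w - p) by apply/normalE.
    rewrite -sharp in rN.
    have [m [c [s [Ss rE]]]] := rN.
    have wr : dotv w (\sum_(i < m) c i *: s i) = 0.
      rewrite dotv_sumr big1 // => i _; rewrite dotvZr.
      have [a [b [Sa [Sb ->]]]] := Ss i.
      have -> : a - b = (a - g) - (b - g) by rewrite opprB addrA subrK.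
      rewrite dotvBr.
      rewrite (wU (a - g)); last by apply: lin_span1; exists a.
      rewrite (wU (b - g)); last by apply: lin_span1; exists b.
      by rewrite subrr mulr0.
    have rr : dotv (w - p) (w - p) = 0.
      by rewrite dotvBr (pperp p pJ) subr0 dotvC rE wr.
    by have /eqP := dotv_self0 _ rr; rewrite subr_eq0 => /eqP ->.
  move=> wJ v [m [c [s [Ss ->]]]].
  rewrite dotv_sumr big1 // => i _; rewrite dotvZr.
  have [y [yl ->]] := Ss i.
  have : normal M x (y - g).
    by rewrite -sharp; apply: lin_span1; exists y, g.
  by move/normalE => /(_ w wJ); rewrite dotvC => ->; rewrite mulr0.
have [U' [ft [oU' [U'x [C1ft fM]]]]] := rC1.
have dft : differentiable ft x := C1ft.1 x U'x.
split.
  pose gam := \row_i 'D_('e_i) ft x.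
  have [p [pJ pperp]] := proj gam.
  exists p; split; first by apply/Tchar.
  exists U', ft; split => //; split => //; split => //; split => //.
  move=> w /Tchar wJ; rewrite (@derive_dotv R n ft x dft) -/gam.
  by have := pperp w wJ; rewrite dotvBl => /eqP; rewrite subr_eq0 => /eqP ->.
split.
  have [p [pJ pperp]] := proj g0.
  exists p, g0; split => //; split; first by apply/(Uchar g0 g0l).
  by move=> w /(Uchar g0 g0l) wJ; apply: pperp.
move=> v u [vT [U2 [ft2 [oU2 [U2x [C1f2 [fM2 vD]]]]]]] [g [gl [gUu gperp]]].
have dft2 := C1f2.1 x U2x.
have gfr : frechet_subdiff f x g by apply/regx.
have uJ : u *m J = 0 by apply/(Uchar g gl).
have vJ : v *m J = 0 by apply/Tchar.
have key w : w *m J = 0 -> dotv g w = dotv v w.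
  move=> wJ; rewrite (vD w (proj2 (Tchar w) wJ)).
  apply: (@claimA R n f M x k U F g U2 ft2 ch Mx gfr oU2 U2x dft2 fM2 w).
  by apply/Dchar.
have dJ : (v - u) *m J = 0 by rewrite mulmxBl vJ uJ subrr.
have dd : dotv (v - u) (v - u) = 0.
  have h1 := gperp (v - u) (proj2 (Uchar g gl (v - u)) dJ).
  by rewrite dotvBl in h1; rewrite dotvBl -key.
by have /eqP := dotv_self0 _ dd; rewrite subr_eq0 => /eqP.
Qed.
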